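(* In the Poisson matching problem $PM(\lambda,\mu)$ (defined in the context), for every blue point $b\in\mathcal{B}$, $$\mathcal{P}(b)=\{r\in\mathcal{R}:g(b,r)=0\}.$$ Moreover, for any $b_1,b_2\in\mathcal{B}$, $\mathcal{P}(b_1)\cap\mathcal{P}(b_2)\ne\emptyset$ implies $\mathcal{P}(b_1)=\mathcal{P}(b_2)$ and $g(b_1,b_2)=1$.
   Context: Poisson matching problem $PM(\lambda,\mu)$, $0<\lambda\le\mu$: $\mathcal{B}$ (blue points) and $\mathcal{R}$ (red points) are independent homogeneous Poisson point processes on $\mathbb{R}$ of intensities $\lambda$ and $\mu$ respectively; $\mathcal{S}=\mathcal{B}\cup\mathcal{R}$. A matching is a map $\mathcal{M}:\mathcal{S}\to\mathcal{S}\cup\{\infty\}$ with $\mathcal{M}(r)\in\mathcal{B}\cup\{\infty\}$ for red $r$, $\mathcal{M}(b)\in\mathcal{R}\cup\{\infty\}$ for blue $b$, and $\mathcal{M}(r)=b$ iff $\mathcal{M}(b)=r$. The matching segment $I_\mathcal{M}(x)$ is the open interval with endpoints $x$ and $\mathcal{M}(x)$ ($(x,\infty)$ if unmatched). $\mathcal{M}$ is nested if for all $x,y\in\mathcal{S}$, $x\in I_\mathcal{M}(y)$ implies $\mathcal{M}(x)$ lies in the closure of $I_\mathcal{M}(y)$. For $b\in\mathcal{B}$, $\mathcal{P}(b)=\{r\in\mathcal{R}:\exists\text{ nested }\mathcal{M}\text{ with }\mathcal{M}(b)=r\}$. For $x<y$, $g(x,y)$ is the number of red points in the open interval $(x,y)$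 minus the number of blue points in $(x,y)$; for $x>y$, $g(x,y)=g(y,x)$. *)

(* Defs.v *)
From Stdlib Require Import Reals Lra ZArith List.
Open Scope R_scope.

(* A point configuration on the real line is a predicate P : R -> Prop. *)

Definition count_in (P : R -> Prop) (a c : R) (n : nat) : Prop :=
  exists l : list R, NoDup l /\ length l = n /\
    forall x, In x l <-> (P x /\ a < x < c).

Definition locally_finite (P : R -> Prop) : Prop :=
  forall a c, exists n, count_in P a c n.

(* [g_val Bl Rd x y z] : g(x,y) = z, i.e. (#red - #blue) in the open interval
   between x and y (symmetric in x,y).  Under local finiteness z is unique. *)
Definition g_val (Bl Rd : R -> Prop) (x y : R) (z : Z) : Prop :=
  exists nr nb, count_in Rd (Rmin x y) (Rmax x y) nr /\
                count_in Bl (Rmin x y) (Rmax x y) nb /\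
                z = (Z.of_nat nr - Z.of_nat nb)%Z.

(* A matching: M x = Some y (matched to y) or None (matched to infinity). *)
Definition is_matching (Bl Rd : R -> Prop) (M : R -> option R) : Prop :=
  (forall r, Rd r -> M r = None \/ exists b, M r = Some b /\ Bl b) /\
  (forall b, Bl b -> M b = None \/ exists r, M b = Some r /\ Rd r) /\
  (forall r b, Rd r -> Bl b -> (M r = Some b <-> M b = Some r)).

Definition in_seg (M : R -> option R) (x z : R) : Prop :=
  match M x with
  | Some y => Rmin x y < z < Rmax x y
  | None => x < z
  end.

(* w (a point of R or infinity = None) lies in the closure of I_M(y),
   closure taken in R ∪ {∞}: closure of (y,∞) is [y,∞]. *)
Definition in_cl_seg (M : R -> option R) (y : R) (w : option R) : Prop :=
  match M y, w with
  | Some y', Some z => Rmin y y' <= z <= Rmax y y'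
  | Some _, None => False
  | None, Some z => y <= z
  | None, None => True
  end.

Definition nested (Bl Rd : R -> Prop) (M : R -> option R) : Prop :=
  forall x y, (Bl x \/ Rd x) -> (Bl y \/ Rd y) ->
    in_seg M y x -> in_cl_seg M y (M x).

Definition Pset (Bl Rd : R -> Prop) (b r : R) : Prop :=
  Rd r /\ exists M, is_matching Bl Rd M /\ nested Bl Rd M /\ M b = Some r.

(* Main.v *)
Require Import Defs.
From Stdlib Require Import Reals ZArith Lra Lia List ClassicalEpsilon Classical.
Open Scope R_scope.

Ltac mm := unfold Rmin, Rmax in *; repeat match goal with
  | |- context [Rle_dec ?a ?b] => destruct (Rle_dec a b)
  | H : context [Rle_dec ?a ?b] |- _ => destruct (Rle_dec a b) end; lra.

Lemma count_unique P a c n m : count_in P a c n -> count_in P a c m -> n = m.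
Proof.
  intros [l1 [N1 [L1 H1]]] [l2 [N2 [L2 H2]]]. subst.
  apply Nat.le_antisymm; apply NoDup_incl_length; auto; intros z Hz.
  - apply H2, H1, Hz.
  - apply H1, H2, Hz.
Qed.

Lemma count_remove P a c n x : count_in P a c n ->
  exists m, count_in (fun z => P z /\ z <> x) a c m /\ (P x -> a < x < c -> n = S m).
Proof.
  intros [l [N [L H]]].
  destruct (in_dec Req_EM_T x l) as [I|I].
  - destruct (in_split _ _ I) as [l1 [l2 E]]. subst l.
    exists (length (l1 ++ l2)). split.
    + exists (l1++l2). split; [eapply NoDup_remove_1; eauto| split; auto].
      intros z; split.
      * intros Hz. assert (z <> x). { intro; subst. eapply NoDup_remove_2; eauto. }
        assert (In z (l1 ++ x :: l2)). { apply in_app_or in Hz; apply in_or_app; simpl; tauto. }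
        apply H in H1. tauto.
      * intros [[Pz Iz] nz]. assert (In z (l1 ++ x :: l2)) by (apply H; auto).
        apply in_app_or in H0; apply in_or_app; simpl in H0; destruct H0 as [?|[?|?]]; auto; congruence.
    + intros; subst. rewrite !length_app; simpl; lia.
  - exists n. split.
    + exists l. split; auto. split; auto. intros z. rewrite H. split.
      * intros [Pz Iz]. split; [split|]; auto. intro; subst; apply I, H; auto.
      * tauto.
    + intros Px Ix. exfalso. apply I, H. auto.
Qed.

Lemma lf_remove P x : locally_finite P -> locally_finite (fun z => P z /\ z <> x).
Proof.
  intros H a c. destruct (H a c) as [n Hn]. destruct (count_remove _ _ _ _ x Hn) as [m [Hm _]].
  eauto.
Qed.

Lemma count_app P a y c n1 n2 : a < y < c -> count_in P a y n1 -> count_in P y c n2 ->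
 (P y -> count_in P a c (n1 + 1 + n2)%nat) /\ (~ P y -> count_in P a c (n1 + n2)%nat).
Proof.
  intros Hy [l1 [N1 [L1 H1]]] [l2 [N2 [L2 H2]]]. split; intros Py.
  - exists (l1 ++ y :: l2). split; [|split].
    + apply NoDup_app; auto.
      * constructor; auto. intro I. apply H2 in I. lra.
      * intros z I1 I2. apply H1 in I1. destruct I2 as [<-|I2]; [lra|]. apply H2 in I2. lra.
    + rewrite length_app; simpl; lia.
    + intros z. rewrite in_app_iff. simpl. rewrite H1, H2. split.
      * intros [?|[<-|?]]; split; try tauto; lra.
      * intros [Pz Iz]. destruct (Rlt_le_dec z y) as [h|h]; [left; split; auto; lra|].
        destruct (Req_dec z y); [right; left; auto| right; right; split; auto; lra].
  - exists (l1 ++ l2). split; [|split].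
    + apply NoDup_app; auto.
      intros z I1 I2. apply H1 in I1. apply H2 in I2. lra.
    + rewrite length_app; lia.
    + intros z. rewrite in_app_iff. rewrite H1, H2. split.
      * intros [?|?]; split; try tauto; lra.
      * intros [Pz Iz]. destruct (Rlt_le_dec z y) as [h|h]; [left; split; auto; lra|].
        destruct (Req_dec z y); [subst; tauto| right; split; auto; lra].
Qed.

Definition cnt (P : R -> Prop) a c : nat := epsilon (inhabits 0%nat) (fun n => count_in P a c n).
Lemma cnt_spec P a c : locally_finite P -> count_in P a c (cnt P a c).
Proof. intros H. unfold cnt. apply epsilon_spec. apply H. Qed.

Lemma cnt_split P a y c : locally_finite P -> a < y < c ->
  (P y -> cnt P a c = (cnt P a y + 1 + cnt P y c)%nat) /\ (~P y -> cnt P a c = (cnt P a y + cnt P y c)%nat).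
Proof.
  intros H Hy. destruct (count_app P a y c _ _ Hy (cnt_spec P a y H) (cnt_spec P y c H)) as [A B].
  split; intros; eapply count_unique; eauto; apply cnt_spec; auto.
Qed.

Lemma count_sub P a c a' c' n n' : count_in P a c n -> count_in P a' c' n' -> a <= a' -> c' <= c -> (n' <= n)%nat.
Proof.
  intros [l [N [L H]]] [l' [N' [L' H']]] ha hc. subst. apply NoDup_incl_length; auto.
  intros z Hz. apply H', H in Hz || (apply H' in Hz; apply H; destruct Hz; split; auto; lra).
Qed.

Lemma count_sub_lt P a c a' c' n n' z : count_in P a c n -> count_in P a' c' n' -> a <= a' -> c' <= c ->
  P z -> a < z < c -> ~ (a' < z < c') -> (n' < n)%nat.
Proof.
  intros [l [N [L H]]] [l' [N' [L' H']]] ha hc Pz Iz Nz. subst.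
  eapply Nat.le_lt_trans; [|apply (remove_length_lt Req_EM_T l z); apply H; auto].
  apply NoDup_incl_length; auto.
  intros w Hw. apply H' in Hw. apply in_in_remove.
  - intro; subst; tauto.
  - apply H. destruct Hw; split; auto; lra.
Qed.

Definition G Bl Rd x y : Z := (Z.of_nat (cnt Rd (Rmin x y) (Rmax x y)) - Z.of_nat (cnt Bl (Rmin x y) (Rmax x y)))%Z.
Definition Q (Bl Rd : R -> Prop) a t : Z := (Z.of_nat (cnt Rd a t) - Z.of_nat (cnt Bl a t))%Z.

Lemma g_val_G Bl Rd x y z : locally_finite Bl -> locally_finite Rd ->
  (g_val Bl Rd x y z <-> z = G Bl Rd x y).
Proof.
  intros hB hR. unfold G. split.
  - intros [nr [nb [C1 [C2 E]]]]. subst.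
    rewrite <- (count_unique _ _ _ _ _ C1 (cnt_spec _ _ _ hR)).
    rewrite <- (count_unique _ _ _ _ _ C2 (cnt_spec _ _ _ hB)). reflexivity.
  - intros ->. do 2 eexists; split; [apply cnt_spec; auto|split; [apply cnt_spec; auto|reflexivity]].
Qed.

Lemma G_sym Bl Rd x y : G Bl Rd x y = G Bl Rd y x.
Proof. unfold G. rewrite Rmin_comm, Rmax_comm. reflexivity. Qed.

Lemma G_Q Bl Rd a x y : locally_finite Bl -> locally_finite Rd -> (forall z, Bl z -> Rd z -> False) ->
  a < x < y ->
  (Rd x -> G Bl Rd x y = (Q Bl Rd a y - Q Bl Rd a x - 1)%Z) /\
  (Bl x -> G Bl Rd x y = (Q Bl Rd a y - Q Bl Rd a x + 1)%Z).
Proof.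
  intros hB hR hd Hx. unfold G, Q.
  rewrite Rmin_left, Rmax_right by lra.
  destruct (cnt_split Rd a x y hR Hx) as [R1 R2].
  destruct (cnt_split Bl a x y hB Hx) as [B1 B2].
  split; intros H.
  - rewrite R1, B2 by (auto; intro; eauto). lia.
  - rewrite R2, B1 by (auto; intro; eauto). lia.
Qed.

Lemma GQ_br Bl Rd a b r : locally_finite Bl -> locally_finite Rd -> (forall z, Bl z -> Rd z -> False) ->
  a < b -> a < r -> Bl b -> Rd r ->
  (G Bl Rd b r = 0%Z <-> Q Bl Rd a r = (Q Bl Rd a b - 1)%Z).
Proof.
  intros hB hR hd hb hr Bb Rr.
  destruct (total_order_T b r) as [[h|h]|h].
  - rewrite (proj2 (G_Q Bl Rd a b r hB hR hd (conj hb h)) Bb). lia.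
  - subst; exfalso; eauto.
  - rewrite G_sym, (proj1 (G_Q Bl Rd a r b hB hR hd (conj hr h)) Rr). lia.
Qed.

Lemma GQ_bb Bl Rd a b1 b2 : locally_finite Bl -> locally_finite Rd -> (forall z, Bl z -> Rd z -> False) ->
  a < b1 -> a < b2 -> Bl b1 -> Bl b2 -> b1 <> b2 ->
  Q Bl Rd a b1 = Q Bl Rd a b2 -> G Bl Rd b1 b2 = 1%Z.
Proof.
  intros hB hR hd h1 h2 B1 B2 ne E.
  destruct (total_order_T b1 b2) as [[h|h]|h].
  - rewrite (proj2 (G_Q Bl Rd a b1 b2 hB hR hd (conj h1 h)) B1). lia.
  - contradiction.
  - rewrite G_sym, (proj2 (G_Q Bl Rd a b2 b1 hB hR hd (conj h2 h)) B2). lia.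
Qed.

Lemma inj_len (A C : R->Prop) (M : R -> option R) a c la lc : NoDup la -> NoDup lc ->
  (forall x, In x la <-> A x /\ a<x<c) -> (forall x, In x lc <-> C x /\ a<x<c) ->
  (forall x, A x -> a<x<c -> exists y, M x = Some y /\ C y /\ a<y<c) ->
  (forall x1 x2 y, A x1 -> A x2 -> M x1 = Some y -> M x2 = Some y -> x1 = x2) ->
  (length la <= length lc)%nat.
Proof.
  intros Na Nc Ha Hc Hm Hi.
  set (f := fun x => match M x with Some y => y | None => x end).
  rewrite <- (length_map f la). apply NoDup_incl_length.
  - apply NoDup_map_NoDup_ForallPairs; auto.
    intros x1 x2 I1 I2 E. apply Ha in I1, I2.
    destruct (Hm x1 (proj1 I1) (proj2 I1)) as [y1 [E1 _]].
    destruct (Hm x2 (proj1 I2) (proj2 I2)) as [y2 [E2 _]].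
    unfold f in E. rewrite E1, E2 in E. subst. eapply Hi; eauto; tauto.
  - intros y Hy. apply in_map_iff in Hy. destruct Hy as [x [<- Ix]]. apply Ha in Ix.
    destruct (Hm x (proj1 Ix) (proj2 Ix)) as [y1 [E1 [Cy Iy]]].
    unfold f. rewrite E1. apply Hc. auto.
Qed.

Lemma nested_g0 Bl Rd M b r : locally_finite Bl -> locally_finite Rd -> (forall z, Bl z -> Rd z -> False) ->
  Bl b -> Rd r -> is_matching Bl Rd M -> nested Bl Rd M -> M b = Some r -> g_val Bl Rd b r 0%Z.
Proof.
  intros hB hR hd Bb Rr [m1 [m2 m3]] Hn Mb.
  assert (Hbr : b <> r) by (intro; subst; eauto).
  destruct (hR (Rmin b r) (Rmax b r)) as [nr Cr].
  destruct (hB (Rmin b r) (Rmax b r)) as [nb Cb].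
  exists nr, nb. split; auto. split; auto.
  assert (key : forall x, (Bl x \/ Rd x) -> Rmin b r < x < Rmax b r ->
     exists y, M x = Some y /\ Rmin b r < y < Rmax b r).
  { intros x Cx Ix.
    assert (H := Hn x b Cx (or_introl Bb)). unfold in_seg, in_cl_seg in H. rewrite Mb in H.
    specialize (H Ix). destruct (M x) as [y|] eqn:E; [|contradiction].
    exists y. split; auto.
    assert (y <> b).
    { intro; subst. destruct Cx as [Bx|Rx].
      - destruct (m2 x Bx) as [E'|[r' [E' R']]]; [congruence|]. rewrite E in E'. inversion E'; subst; eauto.
      - apply (m3 x b Rx Bb) in E. rewrite Mb in E. inversion E; subst. mm. }
    assert (y <> r).
    { intro; subst. destruct Cx as [Bx|Rx].
      - apply (m3 r x Rr Bx) in E. assert (E2 := proj2 (m3 r b Rr Bb) Mb). rewrite E2 in E.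
        inversion E; subst. mm.
      - destruct (m1 x Rx) as [E'|[r' [E' R']]]; [congruence|]. rewrite E in E'. inversion E'; subst; eauto. }
    assert (Q1 : Rmin b r = b \/ Rmin b r = r) by mm.
    assert (Q2 : Rmax b r = b \/ Rmax b r = r) by mm.
    destruct H as [K1 K2].
    split; [destruct (Rle_lt_or_eq_dec _ _ K1) | destruct (Rle_lt_or_eq_dec _ _ K2)]; auto;
      exfalso; destruct Q1, Q2; congruence. }
  destruct Cr as [lr [Nr [Lr Hr]]], Cb as [lb [Nb [Lb Hb]]]. subst.
  enough (length lr = length lb) by lia.
  apply Nat.le_antisymm.
  - eapply (inj_len Rd Bl M); eauto.
    + intros x Rx Ix. destruct (key x (or_intror Rx) Ix) as [y [E Iy]]. exists y; split; auto.
      split; auto. destruct (m1 x Rx) as [E'|[b' [E' B']]]; congruence.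
    + intros x1 x2 y R1 R2 E1 E2. destruct (m1 x1 R1) as [E'|[b' [E' B']]]; [congruence|].
      rewrite E1 in E'. inversion E'; subst.
      apply (m3 _ _ R1 B') in E1. apply (m3 _ _ R2 B') in E2. congruence.
  - eapply (inj_len Bl Rd M); eauto.
    + intros x Bx Ix. destruct (key x (or_introl Bx) Ix) as [y [E Iy]]. exists y; split; auto.
      split; auto. destruct (m2 x Bx) as [E'|[b' [E' B']]]; congruence.
    + intros x1 x2 y B1 B2 E1 E2. destruct (m2 x1 B1) as [E'|[b' [E' R']]]; [congruence|].
      rewrite E1 in E'. inversion E'; subst.
      apply (m3 _ _ R' B1) in E1. apply (m3 _ _ R' B2) in E2. congruence.
Qed.

Lemma adjacent Bl Rd : locally_finite Bl -> locally_finite Rd -> forall n p q, Rd p -> Bl q ->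
  (cnt Bl (Rmin p q) (Rmax p q) + cnt Rd (Rmin p q) (Rmax p q))%nat = n ->
  exists x y, Rd x /\ Bl y /\ Rmin p q <= x <= Rmax p q /\ Rmin p q <= y <= Rmax p q /\
    forall z, (Bl z \/ Rd z) -> z <= Rmin x y \/ Rmax x y <= z.
Proof.
  intros hB hR n. induction n as [n IH] using (well_founded_induction lt_wf).
  intros p q Rp Bq En.
  destruct (classic (exists z, (Bl z \/ Rd z) /\ Rmin p q < z < Rmax p q)) as [[z [Cz Iz]]|N].
  - destruct Cz as [Bz|Rz].
    + edestruct (IH (cnt Bl (Rmin p z) (Rmax p z) + cnt Rd (Rmin p z) (Rmax p z))%nat) as
        [x [y [Rx [By [Ix [Iy Ad]]]]]]; [| apply Rp | apply Bz | reflexivity |].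
      * subst n. apply Nat.add_lt_le_mono.
        -- eapply (count_sub_lt Bl _ _ _ _ _ _ z); try apply cnt_spec; auto; try mm.
        -- eapply (count_sub Rd); try apply cnt_spec; auto; try mm.
      * exists x, y. repeat split; auto; mm.
    + edestruct (IH (cnt Bl (Rmin z q) (Rmax z q) + cnt Rd (Rmin z q) (Rmax z q))%nat) as
        [x [y [Rx [By [Ix [Iy Ad]]]]]]; [| apply Rz | apply Bq | reflexivity |].
      * subst n. apply Nat.add_le_lt_mono.
        -- eapply (count_sub Bl); try apply cnt_spec; auto; try mm.
        -- eapply (count_sub_lt Rd _ _ _ _ _ _ z); try apply cnt_spec; auto; try mm.
      * exists x, y. repeat split; auto; mm.
  - exists p, q. repeat split; auto; try mm.
    intros z Cz. destruct (Rle_dec z (Rmin p q)); auto. destruct (Rle_dec (Rmax p q) z); auto.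
    exfalso; apply N; exists z; split; auto; lra.
Qed.

Ltac dReq := repeat match goal with |- context [Req_EM_T ?a ?b] => destruct (Req_EM_T a b) end.

Lemma build : forall k (Bl Rd : R->Prop) b r, locally_finite Bl -> locally_finite Rd ->
  (forall z, Bl z -> Rd z -> False) -> Bl b -> Rd r ->
  count_in Rd (Rmin b r) (Rmax b r) k -> count_in Bl (Rmin b r) (Rmax b r) k ->
  exists M, is_matching Bl Rd M /\ nested Bl Rd M /\ M b = Some r.
Proof.
  induction k as [|k IH]; intros Bl Rd b r hB hR hd Bb Rr Cr Cb.
  - assert (Emp : forall z, (Bl z \/ Rd z) -> z <= Rmin b r \/ Rmax b r <= z).
    { intros z Cz. destruct (Rle_dec z (Rmin b r)); auto. destruct (Rle_dec (Rmax b r) z); auto.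
      exfalso. destruct Cr as [lr [_ [Lr Hr]]], Cb as [lb [_ [Lb Hb]]].
      destruct lr; [|discriminate]. destruct lb; [|discriminate].
      destruct Cz as [Bz|Rz]; [apply (Hb z)|apply (Hr z)]; split; auto; lra. }
    assert (nbr : b <> r) by (intro; subst; eauto).
    exists (fun z => if Req_EM_T z b then Some r else if Req_EM_T z r then Some b else None).
    split; [split; [|split]|split].
    + intros r0 Rr0. dReq; subst; [exfalso; eauto|right; exists b; auto|left; auto].
    + intros b0 Bb0. dReq; subst; [right; exists r; auto|exfalso; eauto|left; auto].
    + intros r0 b0 Rr0 Bb0. dReq; subst; split; intro H; try congruence; exfalso; eauto.
    + intros u v Cu Cv. assert (Eu := Emp u Cu). assert (Ev := Emp v Cv). unfold in_seg, in_cl_seg.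
      destruct (Req_EM_T v b) as [->|nvb]; [intros; exfalso; destruct Eu; mm|].
      destruct (Req_EM_T v r) as [->|nvr]; [intros; exfalso; destruct Eu; mm|].
      intros Hvu. destruct (Req_EM_T u b) as [->|nub]; [destruct Ev; mm|].
      destruct (Req_EM_T u r) as [->|nur]; [destruct Ev; mm|]. exact I.
    + dReq; congruence.
  - assert (Cr0 := Cr). assert (Cb0 := Cb).
    destruct Cr as [[|p lr] [Nr [Lr Hr]]]; [discriminate|].
    destruct Cb as [[|q lb] [Nb [Lb Hb]]]; [discriminate|].
    destruct (proj1 (Hr p) (or_introl eq_refl)) as [Rp Ip].
    destruct (proj1 (Hb q) (or_introl eq_refl)) as [Bq Iq].
    destruct (adjacent Bl Rd hB hR _ p q Rp Bq eq_refl) as [x [y [Rx [By [Ix [Iy Ad]]]]]].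
    assert (Ix' : Rmin b r < x < Rmax b r) by mm.
    assert (Iy' : Rmin b r < y < Rmax b r) by mm.
    assert (nxy : x <> y) by (intro; subst; eauto).
    assert (nbx : b <> x) by (intro; subst; eauto).
    assert (nby : b <> y) by (intro; subst; mm).
    assert (nrx : r <> x) by (intro; subst; mm).
    assert (nry : r <> y) by (intro; subst; eauto).
    destruct (count_remove Rd _ _ _ x Cr0) as [m1 [C1 E1]].
    destruct (count_remove Bl _ _ _ y Cb0) as [m2 [C2 E2]].
    specialize (E1 Rx Ix'). specialize (E2 By Iy').
    assert (m1 = k) by lia. assert (m2 = k) by lia. subst m1 m2.
    destruct (IH (fun z => Bl z /\ z <> y) (fun z => Rd z /\ z <> x) b r (lf_remove _ _ hB) (lf_remove _ _ hR))
      as [M' [[m1 [m2 m3]] [Hn Mb]]]; auto.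
    { intros z [B1 _] [R1 _]; eauto. }
    set (Bl' := fun z => Bl z /\ z <> y) in *.
    set (Rd' := fun z => Rd z /\ z <> x) in *.
    assert (F3 : forall z w, (Bl' z \/ Rd' z) -> M' z = Some w -> (Bl' w \/ Rd' w)).
    { intros z w [Bz|Rz] E.
      - destruct (m2 z Bz) as [E'|[w' [E' R']]]; [congruence|]. rewrite E in E'. inversion E'; subst; auto.
      - destruct (m1 z Rz) as [E'|[w' [E' R']]]; [congruence|]. rewrite E in E'. inversion E'; subst; auto. }
    exists (fun z => if Req_EM_T z x then Some y else if Req_EM_T z y then Some x else M' z).
    split; [split; [|split]|split].
    + intros r0 Rr0. dReq; subst; [right; exists y; auto|exfalso; eauto|].
      destruct (m1 r0 (conj Rr0 n)) as [E|[w [E [Bw _]]]]; [left|right; exists w]; auto.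
    + intros b0 Bb0. dReq; subst; [exfalso; eauto|right; exists x; auto|].
      destruct (m2 b0 (conj Bb0 n0)) as [E|[w [E [Rw _]]]]; [left|right; exists w]; auto.
    + intros r0 b0 Rr0 Bb0. dReq; subst; try (exfalso; eauto; fail); try tauto.
      * split; intro H; [congruence|]. exfalso.
        destruct (m2 b0) as [E|[w [E [_ nw]]]]; [split; auto|congruence|congruence].
      * split; intro H; [|congruence]. exfalso.
        destruct (m1 r0) as [E|[w [E [_ nw]]]]; [split; auto|congruence|congruence].
      * apply m3; split; auto.
    + intros u v Cu Cv. unfold in_seg, in_cl_seg.
      destruct (Req_EM_T v x) as [->|nvx]; [intros; exfalso; destruct (Ad u Cu); mm|].
      destruct (Req_EM_T v y) as [->|nvy]; [intros; exfalso; destruct (Ad u Cu); mm|].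
      assert (Cv' : Bl' v \/ Rd' v) by (unfold Bl', Rd'; tauto).
      destruct (Req_EM_T u x) as [->|nux].
      * destruct (M' v) as [w|] eqn:Ev.
        -- assert (Cw := F3 v w Cv' Ev). assert (Cw' : Bl w \/ Rd w) by (unfold Bl', Rd' in Cw; tauto).
           intros. destruct (Ad v Cv), (Ad w Cw'); mm.
        -- intros. destruct (Ad v Cv); mm.
      * destruct (Req_EM_T u y) as [->|nuy].
        -- destruct (M' v) as [w|] eqn:Ev.
           ++ assert (Cw := F3 v w Cv' Ev). assert (Cw' : Bl w \/ Rd w) by (unfold Bl', Rd' in Cw; tauto).
              intros. destruct (Ad v Cv), (Ad w Cw'); mm.
           ++ intros. destruct (Ad v Cv); mm.
        -- apply Hn; auto. unfold Bl', Rd'; tauto.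
    + dReq; congruence.
Qed.

Theorem lemmaA5 (Bl Rd : R -> Prop)
  (hB : locally_finite Bl) (hR : locally_finite Rd)
  (hdisj : forall x, Bl x -> Rd x -> False) :
  (forall b, Bl b -> forall r, Pset Bl Rd b r <-> (Rd r /\ g_val Bl Rd b r 0%Z)) /\
  (forall b1 b2, Bl b1 -> Bl b2 -> b1 <> b2 ->
     (exists r, Pset Bl Rd b1 r /\ Pset Bl Rd b2 r) ->
     (forall r, Pset Bl Rd b1 r <-> Pset Bl Rd b2 r) /\ g_val Bl Rd b1 b2 1%Z).
Proof.
  assert (P1 : forall b, Bl b -> forall r, Pset Bl Rd b r <-> (Rd r /\ g_val Bl Rd b r 0%Z)).
  { intros b Bb r. split.
    - intros [Rr [M [Hm [Hn Mb]]]]. split; auto. eapply nested_g0; eauto.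
    - intros [Rr [nr [nb [C1 [C2 E]]]]]. assert (nr = nb) by lia. subst. split; auto. eapply build; eauto. }
  split; auto.
  intros b1 b2 B1 B2 ne [r [H1 H2]].
  apply P1 in H1; auto. apply P1 in H2; auto. destruct H1 as [Rr G1], H2 as [_ G2].
  rewrite g_val_G in G1, G2 by auto.
  split.
  - intros r'. rewrite !P1 by auto.
    set (a := Rmin (Rmin (Rmin b1 b2) r) r' - 1).
    assert (h1 : a < b1) by (unfold a; mm). assert (h2 : a < b2) by (unfold a; mm).
    assert (h3 : a < r) by (unfold a; mm). assert (h4 : a < r') by (unfold a; mm).
    assert (E1 := proj1 (GQ_br Bl Rd a b1 r hB hR hdisj h1 h3 B1 Rr) (eq_sym G1)).
    assert (E2 := proj1 (GQ_br Bl Rd a b2 r hB hR hdisj h2 h3 B2 Rr) (eq_sym G2)).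
    split; intros [Rr' Gr]; split; auto; rewrite g_val_G in * by auto.
    + symmetry. apply (GQ_br Bl Rd a b2 r' hB hR hdisj h2 h4 B2 Rr').
      symmetry in Gr. apply (GQ_br Bl Rd a b1 r' hB hR hdisj h1 h4 B1 Rr') in Gr. lia.
    + symmetry. apply (GQ_br Bl Rd a b1 r' hB hR hdisj h1 h4 B1 Rr').
      symmetry in Gr. apply (GQ_br Bl Rd a b2 r' hB hR hdisj h2 h4 B2 Rr') in Gr. lia.
  - set (a := Rmin (Rmin b1 b2) r - 1).
    assert (h1 : a < b1) by (unfold a; mm). assert (h2 : a < b2) by (unfold a; mm).
    assert (h3 : a < r) by (unfold a; mm).
    assert (E1 := proj1 (GQ_br Bl Rd a b1 r hB hR hdisj h1 h3 B1 Rr) (eq_sym G1)).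
    assert (E2 := proj1 (GQ_br Bl Rd a b2 r hB hR hdisj h2 h3 B2 Rr) (eq_sym G2)).
    rewrite g_val_G by auto. symmetry. apply (GQ_bb Bl Rd a); auto. lia.
Qed.
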